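(* Let $q$ be a prime power with $q\equiv 1 \pmod 3$, let $\delta\in\mathbb{F}_q$ be a cubic nonresidue, and let $\mathbb{F}_q(\delta^{1/3})$ be the cubic extension with $\mathbb{F}_q$-basis $\{1,\delta^{1/3},\delta^{2/3}\}$; write $\alpha=\alpha_1+\alpha_2\delta^{1/3}+\alpha_3\delta^{2/3}$ with $\alpha_i\in\mathbb{F}_q$. Let $\mathbb{H}_q=\{(\alpha,\beta)\in \mathbb{F}_q(\delta^{1/3})^2 : \alpha_2\beta_3-\alpha_3\beta_2\neq 0\}$ with the action of $\mathrm{GL}_3(\mathbb{F}_q)$ given by \[ \begin{bmatrix} a & b & c\\ d & e & f\\ r & s & t \end{bmatrix} (\alpha,\beta) = \left(\frac{a\alpha+b\beta+c}{r\alpha+s\beta+t}, \frac{d\alpha+e\beta+f}{r\alpha+s\beta+t} \right). \] Let $H$ be the subgroup \[H=\left\{\begin{bmatrix} x & y & 0\\ w & z & 0\\ 0 & 0 & t\end{bmatrix}\in\mathrm{GL}_3(\mathbb{F}_q)\right\}\cong \mathrm{GL}_2(\mathbb{F}_q)\times\mathbb{F}_q^\times\] (the centralizer in $\mathrm{GL}_3(\mathbb{F}_q)$ of $\mathrm{diag}(a,a,b)$ with $a\neq b$). Then the set \[\{(u+\delta^{1/3},\,v+\delta^{2/3}) : u,v\in\mathbb{F}_q\}\] is a fundamental domain for the action of $H$ on $\mathbb{H}_q$.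
   Context: A fundamental domain for the action of a subgroup $H$ on $\mathbb{H}_q$ is a subset of $\mathbb{H}_q$ containing exactly one element of each $H$-orbit. A cubic nonresidue is an element of $\mathbb{F}_q^\times$ that is not a cube in $\mathbb{F}_q$. *)

(* Defs.v *)
From HB Require Import structures.
From mathcomp Require Import all_boot all_order all_algebra all_field.
Set Implicit Arguments. Unset Strict Implicit. Unset Printing Implicit Defensive.
Import GRing.Theory.
Local Open Scope ring_scope.

Definition i0 : 'I_3 := @Ordinal 3 0 isT.
Definition i1 : 'I_3 := @Ordinal 3 1 isT.
Definition i2 : 'I_3 := @Ordinal 3 2 isT.

(* The F-basis {1, c, c^2} of L (c plays the role of delta^(1/3)). *)
Definition cbasis (F : fieldType) (L : fieldExtType F) (c : L) : 3.-tuple L :=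
  [tuple 1; c; c ^+ 2].

Definition ccoord (F : fieldType) (L : fieldExtType F) (c : L) (i : 'I_3) (a : L) : F :=
  coord (cbasis c) i a.

Definition inHq (F : fieldType) (L : fieldExtType F) (c : L) (p : L * L) : Prop :=
  ccoord c i1 p.1 * ccoord c i2 p.2 - ccoord c i2 p.1 * ccoord c i1 p.2 != 0.

Definition gact (F : fieldType) (L : fieldExtType F) (M : 'M[F]_3) (p : L * L) : L * L :=
  let den := (M i2 i0)%:A * p.1 + (M i2 i1)%:A * p.2 + (M i2 i2)%:A in
  (((M i0 i0)%:A * p.1 + (M i0 i1)%:A * p.2 + (M i0 i2)%:A) / den,
   ((M i1 i0)%:A * p.1 + (M i1 i1)%:A * p.2 + (M i1 i2)%:A) / den).

Definition inH (F : fieldType) (M : 'M[F]_3) : Prop :=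
  M \in unitmx /\ M i0 i2 = 0 /\ M i1 i2 = 0 /\ M i2 i0 = 0 /\ M i2 i1 = 0.

Definition fundamental_domain (F : fieldType) (L : fieldExtType F) (c : L)
    (D : L * L -> Prop) : Prop :=
  (forall d, D d -> inHq c d) /\
  (forall p, inHq c p ->
     exists! d, D d /\ exists M : 'M[F]_3, inH M /\ gact M p = d).

(* Main.v *)
Require Import Defs.
From HB Require Import structures.
From mathcomp Require Import all_boot all_order all_algebra all_field.
From mathcomp Require Import ring.
Import GRing.Theory.
Local Open Scope ring_scope.

Lemma ord3 (i : 'I_3) : i = i0 \/ i = i1 \/ i = i2.
Proof.
case: i => [[|[|[|n]]] Hi]; [left|right;left|right;right|by []]; exact: val_inj.
Qed.

Section S.
Variables (F : fieldType) (L : fieldExtType F) (c : L).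
Hypothesis Hb : basis_of fullv (cbasis c).

Lemma cexp a : a = (ccoord c i0 a)%:A + ccoord c i1 a *: c + ccoord c i2 a *: c ^+ 2.
Proof.
rewrite {1}(coord_basis Hb (memvf a)) !big_ord_recl big_ord0 addr0 addrA.
have -> : (lift ord0 ord0 : 'I_3) = i1 by apply: val_inj.
have -> : (lift ord0 (lift ord0 ord0) : 'I_3) = i2 by apply: val_inj.
have -> : (ord0 : 'I_3) = i0 by apply: val_inj.
by [].
Qed.

Lemma ccoord_lin i k a b : ccoord c i (k *: a + b) = k * ccoord c i a + ccoord c i b.
Proof. by rewrite /ccoord linearP. Qed.

Lemma ccoord_basis (i j : 'I_3) : ccoord c j (cbasis c)`_i = (i == j)%:R.
Proof. by rewrite /ccoord coord_free // (basis_free Hb). Qed.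

Lemma ccoordE i k0 k1 k2 :
  ccoord c i (k0%:A + k1 *: c + k2 *: c ^+ 2) =
  if i == i0 then k0 else if i == i1 then k1 else k2.
Proof.
have Hf := basis_free Hb.
have e0 : coord (cbasis c) i 1 = (i0 == i)%:R := coord_free i0 i Hf.
have e1 : coord (cbasis c) i c = (i1 == i)%:R := coord_free i1 i Hf.
have e2 : coord (cbasis c) i (c ^+ 2) = (i2 == i)%:R := coord_free i2 i Hf.
rewrite /ccoord !linearD !linearZ /= e0 e1 e2.
by case: (ord3 i) => [->|[->|->]] /=; rewrite ?mulr1 ?mulr0 ?addr0 ?add0r.
Qed.

Lemma gactH (M : 'M[F]_3) (p : L * L) : inH M -> M i2 i2 != 0 /\ gact M p =
  ((M i0 i0 / M i2 i2) *: p.1 + (M i0 i1 / M i2 i2) *: p.2,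
   (M i1 i0 / M i2 i2) *: p.1 + (M i1 i1 / M i2 i2) *: p.2).
Proof.
case=> Hu [H02 [H12 [H20 H21]]].
have Ht : M i2 i2 != 0.
  apply/eqP => h; move: Hu; rewrite unitmxE (expand_det_row _ i2) big1 ?unitr0 // => j _.
  by case: (ord3 j) => [->|[->|->]]; rewrite ?h ?H20 ?H21 mul0r.
split => //; rewrite /gact H02 H12 H20 H21 !mulr_algl !scale0r !add0r !addr0.
rewrite -in_algE -fmorphV !mulrDl !mulr_algr !scalerA.
by rewrite ![(M i2 i2)^-1 * _]mulrC.
Qed.

Lemma coefs X Y (p : L * L) k0 k1 k2 :
  X *: p.1 + Y *: p.2 = k0%:A + k1 *: c + k2 *: c ^+ 2 ->
  [/\ X * ccoord c i0 p.1 + Y * ccoord c i0 p.2 = k0,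
      X * ccoord c i1 p.1 + Y * ccoord c i1 p.2 = k1 &
      X * ccoord c i2 p.1 + Y * ccoord c i2 p.2 = k2].
Proof.
move=> e; have h i : ccoord c i (X *: p.1 + Y *: p.2) = X * ccoord c i p.1 + Y * ccoord c i p.2.
  by rewrite ccoord_lin /ccoord linearZ.
by rewrite -!h e !ccoordE.
Qed.

Lemma lincomb X Y (p : L * L) : X *: p.1 + Y *: p.2 =
  (X * ccoord c i0 p.1 + Y * ccoord c i0 p.2)%:A +
  (X * ccoord c i1 p.1 + Y * ccoord c i1 p.2) *: c +
  (X * ccoord c i2 p.1 + Y * ccoord c i2 p.2) *: c ^+ 2.
Proof. by rewrite {1}(cexp (X *: p.1 + Y *: p.2)) !ccoord_lin /ccoord !linearZ. Qed.

End S.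

Definition mx3 (F : fieldType) (m00 m01 m10 m11 m22 : F) : 'M[F]_3 :=
  \matrix_(i, j) if i == i2 then (if j == i2 then m22 else 0) else if j == i2 then 0
     else if i == i0 then (if j == i0 then m00 else m01) else (if j == i0 then m10 else m11).

Arguments mx3 {F}.

Lemma mx3_unit (F : fieldType) (x y w z a b d e : F) :
  x * a + y * d = 1 -> x * b + y * e = 0 -> w * a + z * d = 0 -> w * b + z * e = 1 ->
  mx3 x y w z 1 \in unitmx.
Proof.
move=> h1 h2 h3 h4.
suff /mulmx1_unit[] : mx3 x y w z 1 *m mx3 a b d e 1 = 1%:M by [].
apply/matrixP => i j; rewrite !mxE !big_ord_recl big_ord0 !mxE.
case: (ord3 i) => [->|[->|->]]; case: (ord3 j) => [->|[->|->]] /=;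
  rewrite ?mulr0 ?mul0r ?addr0 ?add0r ?mulr1 //.
Qed.

Lemma solve2 (F : fieldType) (a1 a2 b1 b2 X Y e1 e2 : F) : a1*b2 - a2*b1 != 0 ->
  X*a1 + Y*b1 = e1 -> X*a2 + Y*b2 = e2 ->
  X = (e1*b2 - e2*b1)/(a1*b2-a2*b1) /\ Y = (a1*e2 - a2*e1)/(a1*b2-a2*b1).
Proof.
move=> hD h1 h2; split; apply: (mulIf hD); rewrite divfK // -h1 -h2; ring.
Qed.

Theorem proposition4p1 (q : nat) (F : finFieldType) (L : fieldExtType F)
    (delta : F) (c : L) :
  #|F| = q -> (q %% 3 = 1)%N ->
  delta != 0 -> ~ (exists x : F, x ^+ 3 = delta) ->
  c ^+ 3 = delta%:A -> basis_of fullv (cbasis c) ->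
  fundamental_domain c
    (fun d : L * L => exists u v : F, d = (u%:A + c, v%:A + c ^+ 2)).
Proof.
move=> _ _ _ _ _ Hb.
have E1 (u : F) : u%:A + c = u%:A + 1 *: c + 0 *: c ^+ 2 by rewrite scale1r scale0r addr0.
have E2 (v : F) : v%:A + c ^+ 2 = v%:A + 0 *: c + 1 *: c ^+ 2 by rewrite scale1r scale0r addr0.
split.
  move=> d [u [v ->]]; rewrite /inHq /= E1 E2 !(@ccoordE _ _ _ Hb) /=.
  by rewrite mulr1 mulr0 subr0 oner_eq0.
move=> p Hp.
set a0 := ccoord c i0 p.1; set a1 := ccoord c i1 p.1; set a2 := ccoord c i2 p.1.
set b0 := ccoord c i0 p.2; set b1 := ccoord c i1 p.2; set b2 := ccoord c i2 p.2.
have HD : a1 * b2 - a2 * b1 != 0 by [].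
set D := a1 * b2 - a2 * b1 in HD.
set X := (1 * b2 - 0 * b1) / D; set Y := (a1 * 0 - a2 * 1) / D.
set W := (0 * b2 - 1 * b1) / D; set Z := (a1 * 1 - a2 * 0) / D.
exists ((X * a0 + Y * b0)%:A + c, (W * a0 + Z * b0)%:A + c ^+ 2); split.
  split; first by exists (X * a0 + Y * b0), (W * a0 + Z * b0).
  exists (mx3 X Y W Z 1).
  have HM : inH (mx3 X Y W Z 1).
    rewrite /inH !mxE /=; split => //.
    apply: (@mx3_unit _ _ _ _ _ a1 a2 b1 b2); rewrite /X /Y /W /Z /D; field; exact: HD.
  split => //; rewrite (@gactH _ _ _ p HM).2 !mxE /= !divr1 E1 E2.
  rewrite !(@lincomb _ _ _ Hb) -/a0 -/a1 -/a2 -/b0 -/b1 -/b2.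
  have -> : X * a1 + Y * b1 = 1 by rewrite /X /Y /D; field.
  have -> : X * a2 + Y * b2 = 0 by rewrite /X /Y /D; field.
  have -> : W * a1 + Z * b1 = 0 by rewrite /W /Z /D; field.
  have -> : W * a2 + Z * b2 = 1 by rewrite /W /Z /D; field.
  by [].
move=> d' [[u [v ->]] [M' [HM' e]]].
move: e; rewrite (@gactH _ _ _ p HM').2 E1 E2 => -[e1 e2].
case: (@coefs _ _ _ Hb _ _ _ _ _ _ e1) => h0 h1 h2.
case: (@coefs _ _ _ Hb _ _ _ _ _ _ e2) => k0 k1 k2.
case: (@solve2 _ _ _ _ _ _ _ _ _ HD h1 h2) => hx hy.
case: (@solve2 _ _ _ _ _ _ _ _ _ HD k1 k2) => hz hw.
rewrite -h0 -k0 hx hy hz hw.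
by rewrite !scale1r !scale0r !addr0.
Qed.
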